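(* For all positive integers $n,m$, every closed knight tour on the $n\times m$ board is bi-sited.
   Context: The $n\times m$ board is $\{1,\dots,n\}\times\{1,\dots,m\}$; a knight moves from $(x,y)$ to $(x',y')$ iff $\{|x-x'|,|y-y'|\}=\{1,2\}$. A closed knight tour is a Hamiltonian cycle in the resulting graph. A pair of edges $((a_1,b_1),(a_2,b_2))$ and $((c_1,d_1),(c_2,d_2))$ of a tour is a \emph{site} if $(|a_1-c_1|,|b_1-d_1|)=(|a_2-c_2|,|b_2-d_2|)\in\{(0,2),(2,0)\}$ or $(|a_1-c_2|,|b_1-d_2|)=(|a_2-c_1|,|b_2-d_1|)\in\{(0,2),(2,0)\}$. A tour is \emph{bi-sited} if it contains two sites with disjoint support, i.e. such that the endpoints of the four edges involved are pairwise distinct. *)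

(* Defs.v *)
From mathcomp Require Import all_boot.
Set Implicit Arguments. Unset Strict Implicit. Unset Printing Implicit Defensive.

Definition square := (nat * nat)%type.

Definition on_board (n m : nat) (p : square) : bool :=
  (1 <= p.1 <= n) && (1 <= p.2 <= m).

Definition absd (a b : nat) : nat := (a - b) + (b - a).

Definition knight_move (p q : square) : bool :=
  let dx := absd p.1 q.1 in let dy := absd p.2 q.2 in
  ((dx == 1) && (dy == 2)) || ((dx == 2) && (dy == 1)).

(* A closed knight tour on the n x m board: a Hamiltonian cycle of the knight
   graph, given as the cyclic sequence of its vertices (at least 3, all
   distinct, exactly the squares of the board, consecutive ones -- including
   last and first -- adjacent). *)
Definition closed_knight_tour (n m : nat) (s : seq square) : Prop :=
  [/\ 2 < size s, uniq s,
      (forall p : square, on_board n m p <-> p \in s)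
    & cycle knight_move s].

Definition tour_step (s : seq square) (u v : square) : Prop :=
  exists i, i < size s /\ nth (0, 0) s i = u /\ nth (0, 0) s (i.+1 %% size s) = v.

Definition tour_edge (s : seq square) (u v : square) : Prop :=
  tour_step s u v \/ tour_step s v u.

Definition dvec (p q : square) : nat * nat := (absd p.1 q.1, absd p.2 q.2).
Definition site_vec (d : nat * nat) : bool := (d == (0, 2)) || (d == (2, 0)).

Definition is_site (a1 a2 c1 c2 : square) : bool :=
  ((dvec a1 c1 == dvec a2 c2) && site_vec (dvec a1 c1))
  || ((dvec a1 c2 == dvec a2 c1) && site_vec (dvec a1 c2)).

Definition bi_sited (s : seq square) : Prop :=
  exists a1 a2 c1 c2 e1 e2 g1 g2 : square,
    [/\ tour_edge s a1 a2 /\ tour_edge s c1 c2 /\ is_site a1 a2 c1 c2,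
        tour_edge s e1 e2 /\ tour_edge s g1 g2 /\ is_site e1 e2 g1 g2
      & uniq [:: a1; a2; c1; c2; e1; e2; g1; g2]].

(* Main.v *)
Require Import Defs.
From mathcomp Require Import all_boot zify.
Set Implicit Arguments. Unset Strict Implicit. Unset Printing Implicit Defensive.


Lemma next_nth_mod (s : seq square) i : uniq s -> i < size s ->
  next s (nth (0,0) s i) = nth (0,0) s (i.+1 %% size s).
Proof.
move=> Us Hi; rewrite next_nth mem_nth //.
case: s Us Hi => [|y p] // Us Hi.
rewrite index_uniq //=; rewrite /= in Hi.
case: (ltngtP i.+1 (size p).+1) => H.
- by rewrite modn_small //= (set_nth_default (0,0)) // -ltnS.
- lia.
- by rewrite H modnn /= nth_default //; case: H => ->.
Qed.

Lemma knight_sym p q : knight_move p q = knight_move q p.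
Proof. by rewrite /knight_move /absd addnC [(p.2 - q.2) + _]addnC. Qed.

Lemma step_props n m s u v : closed_knight_tour n m s -> tour_step s u v ->
  [/\ knight_move u v, on_board n m u & on_board n m v].
Proof.
case=> Hs Us Hb Hc [i [Hi [Hu Hv]]].
have uin : u \in s by rewrite -Hu mem_nth.
have vin : v \in s by rewrite -Hv mem_nth // ltn_mod; lia.
split; [|by apply/Hb|by apply/Hb].
have := next_cycle Hc uin; rewrite -Hu next_nth_mod // Hv Hu //.
Qed.

Lemma two_nbrs n m s p : closed_knight_tour n m s -> on_board n m p ->
  exists q1 q2, [/\ q1 != q2, tour_edge s p q1, tour_edge s p q2,
     knight_move p q1 && on_board n m q1 & knight_move p q2 && on_board n m q2].
Proof.
move=> T Hp; have T' := T; case: T' => Hs Us Hb Hc.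
have pin : p \in s by apply/Hb.
set N := size s; set i := index p s.
have iN : i < N by rewrite index_mem.
have Hpi : nth (0,0) s i = p by rewrite nth_index.
have j0 : exists j, j < N /\ j.+1 %% N = i /\ j != i.+1 %% N.
  case: (posnP i) => Hi0.
  - exists N.-1; rewrite prednK; last lia. rewrite modnn Hi0.
    split; first lia. split=> //.
    rewrite modn_small; lia.
  - exists i.-1; rewrite prednK // modn_small //; split; first lia.
    split=> //.
    case: (ltngtP i.+1 N) => H.
    + rewrite modn_small //; lia.
    + lia.
    + rewrite H modnn; lia.
case: j0 => j [jN [Hj Hji]].
have S1 : tour_step s p (nth (0,0) s (i.+1 %% N)) by exists i.
have S2 : tour_step s (nth (0,0) s j) p by exists j; rewrite Hj.
exists (nth (0,0) s (i.+1 %% N)), (nth (0,0) s j).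
case: (step_props T S1) => K1 _ B1; case: (step_props T S2) => K2 B2 _.
split.
- by rewrite nth_uniq // ?ltn_mod; try lia.
- by left.
- by right.
- by rewrite K1 B1.
- by rewrite knight_sym K2 B2.
Qed.

Definition site_in (s : seq square) a1 a2 c1 c2 :=
  [/\ tour_edge s a1 a2, tour_edge s c1 c2 & is_site a1 a2 c1 c2].

Lemma combine s a1 a2 c1 c2 e1 e2 g1 g2 :
  site_in s a1 a2 c1 c2 -> site_in s e1 e2 g1 g2 ->
  uniq [:: a1; a2; c1; c2; e1; e2; g1; g2] -> bi_sited s.
Proof.
case=> A B C [D E F] U.
by exists a1, a2, c1, c2, e1, e2, g1, g2.
Qed.

Lemma corner n m s P0 P1 P2 P3 P4 P5 P6 :
  closed_knight_tour n m s -> on_board n m P0 -> on_board n m P3 ->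
  (forall q, knight_move P0 q -> on_board n m q -> (q == P1) || (q == P2)) ->
  (forall q, knight_move P3 q -> on_board n m q ->
     [|| q == P4, q == P2, q == P6 | q == P5]) ->
  is_site P0 P1 P3 P4 -> (on_board n m P5 -> is_site P0 P1 P3 P5) ->
  (on_board n m P6 -> is_site P0 P2 P3 P6) ->
  site_in s P0 P1 P3 P4 \/ (site_in s P0 P1 P3 P5 /\ on_board n m P5)
    \/ (site_in s P0 P2 P3 P6 /\ on_board n m P6).
Proof.
move=> T H0 H3 N0 N3 S4 S5 S6.
have [E1 E2] : tour_edge s P0 P1 /\ tour_edge s P0 P2.
  have [q1 [q2 [D Q1 Q2 /andP[K1 B1] /andP[K2 B2]]]] := two_nbrs T H0.
  move: (N0 _ K1 B1) (N0 _ K2 B2) D.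
  by case/orP=> /eqP E; case/orP=> /eqP E'; subst; rewrite ?eqxx.
have [r1 [r2 [D Q1 Q2 /andP[K1 B1] /andP[K2 B2]]]] := two_nbrs T H3.
move: (N3 _ K1 B1) (N3 _ K2 B2) D.
case/or4P=> /eqP R1.
- by subst; left.
- case/or4P=> /eqP R2.
  + by subst; left.
  + by subst; rewrite eqxx.
  + by subst; right; right; split => //; split => //; apply: S6.
  + by subst; right; left; split => //; split => //; apply: S5.
- by subst; right; right; split => //; split => //; apply: S6.
- by subst; right; left; split => //; split => //; apply: S5.
Qed.


Definition corner_out n m s (P0 P1 P2 P3 P4 P5 P6 : square) :=
  site_in s P0 P1 P3 P4 \/ (site_in s P0 P1 P3 P5 /\ on_board n m P5)
    \/ (site_in s P0 P2 P3 P6 /\ on_board n m P6).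

Ltac geo_tac T :=
  rewrite /corner_out; apply: (corner T);
  [ rewrite /on_board /=; lia
  | rewrite /on_board /=; lia
  | move=> [a b]; rewrite /knight_move /on_board /absd /= ?xpair_eqE; lia
  | move=> [a b]; rewrite /knight_move /on_board /absd /= ?xpair_eqE; lia
  | rewrite /is_site /dvec /site_vec /absd /= ?xpair_eqE; lia
  | let H := fresh in move=> H; rewrite /on_board /= in H;
    rewrite /is_site /dvec /site_vec /absd /= ?xpair_eqE; lia
  | let H := fresh in move=> H; rewrite /on_board /= in H;
    rewrite /is_site /dvec /site_vec /absd /= ?xpair_eqE; lia ].

Lemma inst0 n m s : closed_knight_tour n m s -> 3 <= n -> 3 <= m ->
  corner_out n m s (1,1) (3,2) (2,3) (3,1) (1,2) (5,2) (4,3).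
Proof. move=> T Hn Hm; geo_tac T. Qed.

Lemma inst1 n m s : closed_knight_tour n m s -> 3 <= n -> 3 <= m ->
  corner_out n m s (1,1) (2,3) (3,2) (1,3) (2,1) (2,5) (3,4).
Proof. move=> T Hn Hm; geo_tac T. Qed.

Lemma inst2 n m s : closed_knight_tour n m s -> 3 <= n -> 3 <= m ->
  corner_out n m s (1,m) (3,m-1) (2,m-2) (3,m) (1,m-1) (5,m-1) (4,m-2).
Proof. move=> T Hn Hm; geo_tac T. Qed.

Lemma inst5 n m s : closed_knight_tour n m s -> 3 <= n -> 3 <= m ->
  corner_out n m s (n,1) (n-1,3) (n-2,2) (n,3) (n-1,1) (n-1,5) (n-2,4).
Proof. move=> T Hn Hm; geo_tac T. Qed.

Lemma inst6 n m s : closed_knight_tour n m s -> 3 <= n -> 3 <= m ->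
  corner_out n m s (n,m) (n-2,m-1) (n-1,m-2) (n-2,m) (n,m-1) (n-4,m-1) (n-3,m-2).
Proof. move=> T Hn Hm; geo_tac T. Qed.

Lemma inst7 n m s : closed_knight_tour n m s -> 3 <= n -> 3 <= m ->
  corner_out n m s (n,m) (n-1,m-2) (n-2,m-1) (n,m-2) (n-1,m) (n-1,m-4) (n-2,m-3).
Proof. move=> T Hn Hm; geo_tac T. Qed.

Ltac grab I H B := case: I => [H|[[H B]|[H B]]].

Ltac uniq_tac := rewrite /=; repeat (apply/andP; split); rewrite ?inE ?negb_or;
  repeat (apply/andP; split); rewrite ?xpair_eqE; lia.

Ltac sym_pair I J :=
  let H1 := fresh "H" in let B1 := fresh "B" in
  let H2 := fresh "H" in let B2 := fresh "B" in
  grab I H1 B1; grab J H2 B2;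
  apply: (combine H1 H2); uniq_tac.

Ltac kill B := try (by exfalso; move: B; rewrite /on_board /=).

Ltac cgrab I H :=
  let B := fresh "B" in grab I H B; [ | kill B | kill B].

Ltac comb H1 H2 := apply: (combine H1 H2); vm_compute; reflexivity.

Ltac conc_pair I J :=
  let H1 := fresh "H" in let H2 := fresh "H" in
  cgrab I H1; cgrab J H2; comb H1 H2.

Ltac conc4 I J K L :=
  let H1 := fresh "H" in let H2 := fresh "H" in
  let H3 := fresh "H" in let H4 := fresh "H" in
  cgrab I H1; cgrab J H2; cgrab K H3; cgrab L H4;
  first [ comb H1 H2 | comb H1 H3 | comb H1 H4 | comb H2 H3 | comb H2 H4 | comb H3 H4 ].

Theorem proposition4p2 (n m : nat) (s : seq square) :
  0 < n -> 0 < m -> closed_knight_tour n m s -> bi_sited s.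
Proof.
move=> n0 m0 T.
have [Hn Hm] : 3 <= n /\ 3 <= m.
  have H11 : on_board n m (1,1) by rewrite /on_board /=; lia.
  have [[a b] [[c d] [D _ _ /andP[K1 B1] /andP[K2 B2]]]] := two_nbrs T H11.
  move: D K1 B1 K2 B2; rewrite /knight_move /on_board /absd /= ?xpair_eqE; lia.
case: (leqP 6 m) => Hm6.
  sym_pair (inst0 T Hn Hm) (inst6 T Hn Hm).
case: (leqP 6 n) => Hn6.
  sym_pair (inst1 T Hn Hm) (inst7 T Hn Hm).
have Hnn : n = 3 \/ n = 4 \/ n = 5 by lia.
have Hmm : m = 3 \/ m = 4 \/ m = 5 by lia.
case: Hnn => [En|[En|En]]; case: Hmm => [Em|[Em|Em]]; subst n m.
- have C : on_board 3 3 (2,2) by [].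
  have [[a b] [_ [_ _ _ /andP[K1 B1] _]]] := two_nbrs T C.
  move: K1 B1; rewrite /knight_move /on_board /absd /=; lia.
- conc_pair (inst0 T Hn Hm) (inst6 T Hn Hm).
- conc_pair (inst0 T Hn Hm) (inst6 T Hn Hm).
- conc_pair (inst1 T Hn Hm) (inst7 T Hn Hm).
- conc_pair (inst0 T Hn Hm) (inst2 T Hn Hm).
- conc_pair (inst0 T Hn Hm) (inst6 T Hn Hm).
- conc_pair (inst1 T Hn Hm) (inst7 T Hn Hm).
- conc_pair (inst0 T Hn Hm) (inst6 T Hn Hm).
- conc4 (inst0 T Hn Hm) (inst1 T Hn Hm) (inst2 T Hn Hm) (inst5 T Hn Hm).
Qed.
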